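(* Let $h$ be a probability density on $\mathbb{R}^d$ that is $(\alpha,\beta)$-admissible for functions $\alpha,\beta:(0,\infty)\to(0,\infty)$, let $\epsilon>0$ and $k\in(0,2)$, and set $\alpha'=\alpha(k\epsilon)$ and $\beta'=\beta((2-k)\epsilon)$. Let $f:D^n\to\mathbb{R}^d$ and let $S:D^n\to(0,\infty)$ be a $\beta'$-smooth upper bound on the local sensitivity of $f$. Let $Z$ be a random variable with density $h$. Then the randomized algorithm $A(x)=f(x)+\frac{S(x)}{\alpha'}\cdot Z$ is $\epsilon$-differentially private.
   Context: $D^n$ denotes the set of datasets consisting of $n$ elements from a domain $D$. The Hamming distance is $d(x,y)=|\{i:x_i\neq y_i\}|$; $x,y$ are neighboring if $d(x,y)=1$. A randomized mechanism $M$ is $\epsilon$-differentially private if for all neighboring $x,y\in D^n$ and all measurable sets $\mathcal{S}$ of outputs, $\Pr[M(x)\in\mathcal{S}]\le e^{\epsilon}\Pr[M(y)\in\mathcal{S}]$. The local sensitivity of $f:D^n\to\mathbb{R}^d$ at $x$ is $LS_f(x)=\max_{y:d(x,y)=1}\|f(x)-f(y)\|_1$. For $\beta>0$, a function $S:D^n\to\mathbb{R}$ is a $\beta$-smooth upper bound on the local sensitivity of $f$ if $S(x)\ge LS_f(x)$ for all $x\in D^n$ and $S(x)\le e^{\beta}S(y)$ for all $x,y$ with $d(x,y)=1$. Given functions $\alpha,\beta:(0,\infty)\to(0,\infty)$, a probability density $h$ on $\mathbb{R}^d$ is $(\alpha,\beta)$-admissible if for every $\epsilon>0$, every $\Delta\in\mathbb{R}^d$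 with $\|\Delta\|_1\le\alpha(\epsilon)$, every $\lambda\in\mathbb{R}$ with $|\lambda|\le\beta(\epsilon)$, and every measurable $\mathcal{S}\subseteq\mathbb{R}^d$, with $Z\sim h$: (sliding) $\Pr[Z\in\mathcal{S}]\le e^{\epsilon/2}\Pr[Z\in\mathcal{S}+\Delta]$, and (dilation) $\Pr[Z\in\mathcal{S}]\le e^{\epsilon/2}\Pr[Z\in e^{\lambda}\cdot\mathcal{S}]$. *)

(* Defs.v *)
(* R^d is modelled as [d.-tuple R]
   with its canonical (product = Borel) sigma-algebra from mathcomp-analysis. *)
From HB Require Import structures.
From mathcomp Require Import all_boot all_order all_algebra.
From mathcomp Require Import all_classical all_reals all_analysis.
Set Implicit Arguments. Unset Strict Implicit. Unset Printing Implicit Defensive.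
Import Order.TTheory GRing.Theory Num.Theory.
Local Open Scope classical_set_scope.
Local Open Scope ring_scope.

Section Defs.
Variable R : realType.

Definition vadd (d : nat) (x y : d.-tuple R) : d.-tuple R :=
  [tuple tnth x i + tnth y i | i < d].
Definition vscale (d : nat) (c : R) (x : d.-tuple R) : d.-tuple R :=
  [tuple c * tnth x i | i < d].
Definition vsub (d : nat) (x y : d.-tuple R) : d.-tuple R :=
  [tuple tnth x i - tnth y i | i < d].
Definition l1norm (d : nat) (x : d.-tuple R) : R := \sum_(i < d) `|tnth x i|.

Definition set_translate (d : nat) (A : set (d.-tuple R)) (v : d.-tuple R) :=
  [set vadd s v | s in A].
Definition set_dilate (d : nat) (c : R) (A : set (d.-tuple R)) :=
  [set vscale c s | s in A].

Definition box (d : nat) (a b : d.-tuple R) : set (d.-tuple R) :=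
  [set x | forall i : 'I_d, tnth a i < tnth x i <= tnth b i].

(* lam is the Lebesgue measure on R^d: the (unique) measure on the Borel sets
   giving every box its volume *)
Definition is_lebesgue_measure (d : nat)
    (lam : {measure set (d.-tuple R) -> \bar R}) : Prop :=
  forall a b : d.-tuple R, (forall i, tnth a i <= tnth b i) ->
    lam (box a b) = (\prod_(i < d) (tnth b i - tnth a i))%:E.

Definition prob_density (d : nat) (lam : {measure set (d.-tuple R) -> \bar R})
    (h : d.-tuple R -> R) : Prop :=
  [/\ measurable_fun setT h, (forall z, 0 <= h z)
    & (\int[lam]_z (h z)%:E = 1)%E].

Definition dens_prob (d : nat) (lam : {measure set (d.-tuple R) -> \bar R})
    (h : d.-tuple R -> R) (A : set (d.-tuple R)) : \bar R :=
  (\int[lam]_(z in A) (h z)%:E)%E.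

Definition admissible (d : nat) (lam : {measure set (d.-tuple R) -> \bar R})
    (h : d.-tuple R -> R) (alpha beta : R -> R) : Prop :=
  forall (eps : R), 0 < eps ->
  forall (Delta : d.-tuple R), l1norm Delta <= alpha eps ->
  forall (lambda : R), `|lambda| <= beta eps ->
  forall A : set (d.-tuple R), measurable A ->
    (dens_prob lam h A <= (expR (eps / 2))%:E * dens_prob lam h (set_translate A Delta))%E /\
    (dens_prob lam h A <= (expR (eps / 2))%:E * dens_prob lam h (set_dilate (expR lambda) A))%E.

End Defs.

Section Privacy.
Variable R : realType.
Variables (D : Type) (n : nat).

Definition neighbors (x y : 'I_n -> D) : Prop :=
  exists i : 'I_n, x i <> y i /\ forall j : 'I_n, j <> i -> x j = y j.

Definition local_sensitivity (d : nat) (f : ('I_n -> D) -> d.-tuple R)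
    (x : 'I_n -> D) : \bar R :=
  ereal_sup [set (l1norm (vsub (f x) (f y)))%:E | y in [set y | neighbors x y]].

Definition smooth_upper_bound (d : nat) (beta : R)
    (f : ('I_n -> D) -> d.-tuple R) (S : ('I_n -> D) -> R) : Prop :=
  (forall x, (local_sensitivity f x <= (S x)%:E)%E) /\
  (forall x y, neighbors x y -> S x <= expR beta * S y).

(* a randomized mechanism given as M x : Omega -> R^d on a probability space *)
Definition diff_private (dO : measure_display) (Omega : measurableType dO)
    (P : probability Omega R) (d : nat) (eps : R)
    (M : ('I_n -> D) -> Omega -> d.-tuple R) : Prop :=
  forall x y, neighbors x y ->
  forall A : set (d.-tuple R), measurable A ->
    (P (M x @^-1` A) <= (expR eps)%:E * P (M y @^-1` A))%E.

End Privacy.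

(* Main.v *)
Require Import Defs.
From HB Require Import structures.
From mathcomp Require Import all_boot all_order all_algebra.
From mathcomp Require Import all_classical all_reals all_analysis.
From mathcomp Require Import measurable_realfun.
From mathcomp Require Import lra ring.
Set Implicit Arguments. Unset Strict Implicit.
Import Order.TTheory GRing.Theory Num.Theory.
Local Open Scope classical_set_scope.
Local Open Scope ring_scope.

Section Helpers.
Variable R : realType.

Definition aff (d : nat) (v : d.-tuple R) (c : R) (z : d.-tuple R) :=
  vadd v (vscale c z).

Lemma tnth_aff d (v : d.-tuple R) c z i :
  tnth (aff v c z) i = tnth v i + c * tnth z i.
Proof. by rewrite /aff /vadd /vscale !tnth_mktuple. Qed.

Lemma measurable_aff d (v : d.-tuple R) c : measurable_fun setT (aff v c).
Proof.
apply/measurable_fun_tnthP => i.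
have -> : (tnth (T:=R))^~ i \o aff v c = (fun z => tnth v i + c * tnth z i).
  by apply: funext => z /=; rewrite tnth_aff.
apply: measurable_funD; first exact: measurable_cst.
apply: measurable_funM; first exact: measurable_cst.
exact: measurable_tnth.
Qed.

Lemma l1norm_vscale d c (v : d.-tuple R) : l1norm (vscale c v) = `|c| * l1norm v.
Proof.
rewrite /l1norm mulr_sumr; apply: eq_bigr => i _.
by rewrite /vscale tnth_mktuple normrM.
Qed.

Lemma l1norm_vsubC d (u v : d.-tuple R) : l1norm (vsub u v) = l1norm (vsub v u).
Proof.
rewrite /l1norm; apply: eq_bigr => i _.
by rewrite /vsub !tnth_mktuple distrC.
Qed.

End Helpers.

Lemma neighbors_sym D n (x y : 'I_n -> D) : neighbors x y -> neighbors y x.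
Proof.
move=> [i [hi hj]]; exists i; split; first by move=> e; apply: hi.
by move=> j /hj ->.
Qed.

Unset Implicit Arguments.

Theorem theorem1 (R : realType) (d : nat)
  (lam : {measure set (d.-tuple R) -> \bar R})
  (Hlam : is_lebesgue_measure lam)
  (h : d.-tuple R -> R) (Hh : prob_density lam h)
  (alpha beta : R -> R)
  (Halpha : forall e : R, 0 < e -> 0 < alpha e)
  (Hbeta : forall e : R, 0 < e -> 0 < beta e)
  (Hadm : admissible lam h alpha beta)
  (eps k : R) (Heps : 0 < eps) (Hk : 0 < k < 2)
  (D : Type) (n : nat)
  (f : ('I_n -> D) -> d.-tuple R) (S : ('I_n -> D) -> R)
  (HSpos : forall x, 0 < S x)
  (HS : smooth_upper_bound (beta ((2 - k) * eps)) f S)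
  (dO : measure_display) (Omega : measurableType dO) (P : probability Omega R)
  (Z : Omega -> d.-tuple R) (HZm : measurable_fun setT Z)
  (HZ : forall A : set (d.-tuple R), measurable A ->
          P (Z @^-1` A) = dens_prob lam h A) :
  diff_private P eps
    (fun (x : 'I_n -> D) (w : Omega) =>
       vadd (f x) (vscale (S x / alpha (k * eps)) (Z w))).
Proof.
move=> x y nxy A mA.
case/andP: Hk => k0 k2.
have ke : 0 < k * eps by rewrite mulr_gt0.
have ke2 : 0 < (2 - k) * eps by rewrite mulr_gt0 // subr_gt0.
set a := alpha (k * eps).
have a0 : 0 < a by exact: Halpha.
set b := beta ((2 - k) * eps).
set cx := S x / a. set cy := S y / a.
have cx0 : 0 < cx by rewrite divr_gt0.
have cy0 : 0 < cy by rewrite divr_gt0.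
have mpre : forall v c, measurable (aff v c @^-1` A).
  by move=> v c; rewrite -[X in measurable X]setTI; exact: measurable_aff.
set Bx := aff (f x) cx @^-1` A.
set By := aff (f y) cy @^-1` A.
set T := aff (f x) cy @^-1` A.
change (P (Z @^-1` Bx) <= (expR eps)%:E * P (Z @^-1` By))%E.
rewrite !HZ; try exact: mpre.
set lmb := ln (S x) - ln (S y).
have elmb : expR lmb = cx / cy.
  rewrite /lmb expRB !lnK ?posrE ?HSpos //.
  by rewrite /cx /cy invf_div mulrA divfK // gt_eqF.
have hlmb : `|lmb| <= b.
  have [HS1 HS2] := HS.
  have h1 := HS2 _ _ nxy.
  have h2 := HS2 _ _ (neighbors_sym nxy).
  have l1 : ln (S x) <= b + ln (S y).
    rewrite -(expRK b) -lnM ?posrE ?expR_gt0 ?HSpos //.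
    by rewrite ler_ln ?posrE ?mulr_gt0 ?expR_gt0 ?HSpos.
  have l2 : ln (S y) <= b + ln (S x).
    rewrite -(expRK b) -lnM ?posrE ?expR_gt0 ?HSpos //.
    by rewrite ler_ln ?posrE ?mulr_gt0 ?expR_gt0 ?HSpos.
  rewrite ler_norml /lmb; apply/andP; split; lra.
have Delta0 : l1norm (vscale 0 (f x)) <= alpha ((2 - k) * eps).
  by rewrite l1norm_vscale normr0 mul0r ltW // Halpha.
have [_ st1] := Hadm _ ke2 _ Delta0 _ hlmb Bx (mpre _ _).
have cxn : cx != 0 by rewrite gt_eqF.
have cyn : cy != 0 by rewrite gt_eqF.
have dilE : set_dilate (expR lmb) Bx = T.
  apply/seteqP; split.
    move=> _ [s Bs <-]; rewrite /T /=.
    suff -> : aff (f x) cy (vscale (expR lmb) s) = aff (f x) cx s by [].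
    apply: eq_from_tnth => i; rewrite !tnth_aff /vscale tnth_mktuple elmb.
    by congr (_ + _); field.
  move=> w Tw; exists (vscale (cy / cx) w).
    rewrite /Bx /=.
    suff -> : aff (f x) cx (vscale (cy / cx) w) = aff (f x) cy w by [].
    apply: eq_from_tnth => i; rewrite !tnth_aff /vscale tnth_mktuple.
    by congr (_ + _); field.
  apply: eq_from_tnth => i; rewrite /vscale !tnth_mktuple elmb.
  by field; rewrite cxn cyn.
rewrite dilE in st1.
set Delta := vscale (- cy^-1) (vsub (f y) (f x)).
have hD : l1norm Delta <= a.
  rewrite /Delta l1norm_vscale normrN gtr0_norm ?invr_gt0 //.
  rewrite ler_pdivrMl // /cy divfK ?gt_eqF //.
  have [HS1 _] := HS.
  rewrite -lee_fin; apply: le_trans (HS1 y).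
  apply: ereal_sup_ubound; exists x => //; exact: neighbors_sym.
have b0 : `|0 : R| <= beta (k * eps) by rewrite normr0 ltW // Hbeta.
have [st2 _] := Hadm _ ke _ hD _ b0 T (mpre _ _).
have trE : set_translate T Delta = By.
  apply/seteqP; split.
    move=> _ [s Ts <-]; rewrite /By /=.
    suff -> : aff (f y) cy (vadd s Delta) = aff (f x) cy s by [].
    apply: eq_from_tnth => i; rewrite !tnth_aff /Delta /vadd /vscale /vsub !tnth_mktuple.
    rewrite mulrDr mulrA mulrN divff ?gt_eqF //; lra.
  move=> u Bu; exists (vsub u Delta).
    rewrite /T /=.
    suff -> : aff (f x) cy (vsub u Delta) = aff (f y) cy u by [].
    apply: eq_from_tnth => i; rewrite !tnth_aff /Delta /vadd /vscale /vsub !tnth_mktuple.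
    rewrite mulrBr mulrA mulrN divff ?gt_eqF //; lra.
  apply: eq_from_tnth => i; rewrite /vadd /vsub !tnth_mktuple; lra.
rewrite trE in st2.
apply: (le_trans st1).
have -> : expR eps = expR ((2 - k) * eps / 2) * expR (k * eps / 2).
  by rewrite -expRD; congr expR; field.
rewrite EFinM -muleA; apply: lee_wpmul2l.
  by rewrite lee_fin expR_ge0.
exact: st2.
Qed.
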